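(* Let $G$ be a finite group with $c(G)$ conjugacy classes, and let $\pi\in S_4$ be a non-identity permutation with $\pi(1)=1$ or $\pi(4)=4$. Then $Pr_\pi(G)=\frac{c(G)}{|G|}$.
   Context: For $\pi\in S_n$ written in one-line notation $\langle\pi_1\dots\pi_n\rangle$, $Pr_\pi(G)$ is the probability that $a_1a_2\cdots a_n=a_{\pi_1}a_{\pi_2}\cdots a_{\pi_n}$ when $a_1,\dots,a_n$ are independent uniformly random elements of the finite group $G$. $c(G)$ is the number of conjugacy classes of $G$. *)

(* Defs.v *)
From mathcomp Require Import all_boot all_order all_algebra all_fingroup.
Set Implicit Arguments. Unset Strict Implicit. Unset Printing Implicit Defensive.
Import GRing.Theory Num.Theory.

(* Pr_pi(G): probability that a_1 ... a_n = a_{pi 1} ... a_{pi n}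
   for a_1..a_n independent uniform in G.  Indices 1..n are 'I_n = {0..n-1}. *)
Definition Pr_perm (gT : finGroupType) (G : {group gT}) (n : nat) (p : 'S_n) : rat :=
  (#|[set a : {ffun 'I_n -> gT} |
        [forall i, a i \in G] &&
        ((\prod_(i < n) a i)%g == (\prod_(i < n) a (p i))%g)]|%:R
   / (#|G| ^ n)%:R)%R.

Definition nclasses (gT : finGroupType) (G : {group gT}) : nat := #|classes G|.

(* Main.v *)
Require Import Defs.
From mathcomp Require Import all_boot all_order all_algebra all_fingroup.
Open Scope group_scope.

Section S.
Variables (gT : finGroupType) (G : {group gT}).

Definition C := (\sum_(x in G) \sum_(y in G) (((x * y)%g == (y * x)%g) : nat))%N.

Lemma commC : C = (#|G| * nclasses G)%N.
Proof.
have acts : [acts G, on G | 'J] by rewrite astabsJ normG.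
have := Frobenius_Cauchy acts.
have -> : [set orbit 'J G x | x in G] = classes G.
  by apply: eq_imset => x; apply: orbitJ.
rewrite /nclasses mulnC => <-; rewrite /C.
apply: eq_bigr => a aG.
rewrite -sum1_card [RHS]big_mkcond [LHS]big_mkcond /=.
apply: eq_bigr => x _.
rewrite /afix !inE.
case: (x \in G) => //=.
rewrite sub1set inE /= (conjgC x a) (inj_eq (mulgI a)) eq_sym.
by case: eqP.
Qed.

Lemma reindexL (b : gT) : b \in G -> forall F : gT -> nat,
  (\sum_(x in G) F x = \sum_(x in G) F (b * x)%g)%N.
Proof. by move=> bG F; rewrite (reindex_inj (mulgI b)); apply: eq_bigl => x; rewrite /= groupMl. Qed.

Lemma reindexR (b : gT) : b \in G -> forall F : gT -> nat,
  (\sum_(x in G) F x = \sum_(x in G) F (x * b)%g)%N.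
Proof. by move=> bG F; rewrite (reindex_inj (mulIg b)); apply: eq_bigl => x; rewrite /= groupMr. Qed.

Definition T3 (Q : gT -> gT -> gT -> bool) :=
  (\sum_(a in G) \sum_(b in G) \sum_(c in G) (Q a b c : nat))%N.

Lemma Q1 : T3 (fun a b c => a * b * c == b * a * c) = (#|G| * C)%N.
Proof.
rewrite /T3 /C big_distrr; apply: eq_bigr => a aG.
rewrite big_distrr; apply: eq_bigr => b bG.
under eq_bigr do rewrite (inj_eq (mulIg _)).
by rewrite sum_nat_const.
Qed.

Lemma Q2 : T3 (fun a b c => a * b * c == a * c * b) = (#|G| * C)%N.
Proof.
rewrite /T3 -[(_ * C)%N]sum_nat_const /C; apply: eq_bigr => a aG.
apply: eq_bigr => b bG; apply: eq_bigr => c cG.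
by rewrite -!mulgA (inj_eq (mulgI _)).
Qed.

Lemma Q3 : T3 (fun a b c => a * b * c == c * b * a) = (#|G| * C)%N.
Proof.
rewrite /T3 -[(_ * C)%N]sum_nat_const /C exchange_big /=; apply: eq_bigr => b bG.
rewrite (@reindexR _ (groupVr bG)).
apply: eq_bigr => a aG.
rewrite (@reindexR _ (groupVr bG)).
apply: eq_bigr => c cG.
by rewrite mulgKV !mulgA mulgKV (inj_eq (mulIg _)).
Qed.

Lemma Q4 : T3 (fun a b c => a * b * c == b * c * a) = (#|G| * C)%N.
Proof.
rewrite /T3 /C big_distrr; apply: eq_bigr => a aG.
rewrite [RHS](_ : _ = \sum_(b in G) \sum_(c in G) ((a * c)%g == (c * a)%g : nat))%N; last by rewrite sum_nat_const.
apply: eq_bigr => b bG.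
rewrite (@reindexL _ (groupVr bG)).
apply: eq_bigr => c cG.
by rewrite -(mulgA a b) mulKVg.
Qed.

Lemma Q5 : T3 (fun a b c => a * b * c == c * a * b) = (#|G| * C)%N.
Proof.
rewrite /T3 -[(_ * C)%N]sum_nat_const /C; apply: eq_bigr => a aG.
rewrite (@reindexL _ (groupVr aG)).
apply: eq_bigr => b bG; apply: eq_bigr => c cG.
by rewrite -(mulgA c) mulKVg.
Qed.

Definition N4 (P : gT -> gT -> gT -> gT -> bool) :=
  (\sum_(x in G) \sum_(y in G) \sum_(z in G) \sum_(w in G) (P x y z w : nat))%N.

Lemma FixL P Q : (forall x y z w, P x y z w = Q y z w) -> N4 P = (#|G| * T3 Q)%N.
Proof.
move=> PQ; rewrite /N4 -[(_ * T3 Q)%N]sum_nat_const /T3; apply: eq_bigr => x _.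
apply: eq_bigr => y _; apply: eq_bigr => z _; apply: eq_bigr => w _; by rewrite PQ.
Qed.

Lemma FixR P Q : (forall x y z w, P x y z w = Q x y z) -> N4 P = (#|G| * T3 Q)%N.
Proof.
move=> PQ; rewrite /N4 /T3 big_distrr; apply: eq_bigr => x _.
rewrite big_distrr; apply: eq_bigr => y _.
rewrite big_distrr; apply: eq_bigr => z _.
under eq_bigr do rewrite PQ.
by rewrite sum_nat_const.
Qed.

Definition K := (#|G| * (#|G| * C))%N.

Lemma C1 : N4 (fun x y z w => x * y * z * w == x * z * y * w) = K.
Proof. by rewrite (@FixL _ (fun y z w => y * z * w == z * y * w)) ?Q1 // => x y z w; rewrite -!mulgA (inj_eq (mulgI _)) !mulgA. Qed.
Lemma C2 : N4 (fun x y z w => x * y * z * w == x * y * w * z) = K.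
Proof. by rewrite (@FixL _ (fun y z w => y * z * w == y * w * z)) ?Q2 // => x y z w; rewrite -!mulgA (inj_eq (mulgI _)) !mulgA. Qed.
Lemma C3 : N4 (fun x y z w => x * y * z * w == x * w * z * y) = K.
Proof. by rewrite (@FixL _ (fun y z w => y * z * w == w * z * y)) ?Q3 // => x y z w; rewrite -!mulgA (inj_eq (mulgI _)) !mulgA. Qed.
Lemma C4 : N4 (fun x y z w => x * y * z * w == x * z * w * y) = K.
Proof. by rewrite (@FixL _ (fun y z w => y * z * w == z * w * y)) ?Q4 // => x y z w; rewrite -!mulgA (inj_eq (mulgI _)) !mulgA. Qed.
Lemma C5 : N4 (fun x y z w => x * y * z * w == x * w * y * z) = K.
Proof. by rewrite (@FixL _ (fun y z w => y * z * w == w * y * z)) ?Q5 // => x y z w; rewrite -!mulgA (inj_eq (mulgI _)) !mulgA. Qed.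
Lemma C6 : N4 (fun x y z w => x * y * z * w == y * x * z * w) = K.
Proof. by rewrite (@FixR _ (fun x y z => x * y * z == y * x * z)) ?Q1 // => x y z w; rewrite (inj_eq (mulIg _)). Qed.
Lemma C7 : N4 (fun x y z w => x * y * z * w == z * y * x * w) = K.
Proof. by rewrite (@FixR _ (fun x y z => x * y * z == z * y * x)) ?Q3 // => x y z w; rewrite (inj_eq (mulIg _)). Qed.
Lemma C8 : N4 (fun x y z w => x * y * z * w == y * z * x * w) = K.
Proof. by rewrite (@FixR _ (fun x y z => x * y * z == y * z * x)) ?Q4 // => x y z w; rewrite (inj_eq (mulIg _)). Qed.
Lemma C9 : N4 (fun x y z w => x * y * z * w == z * x * y * w) = K.
Proof. by rewrite (@FixR _ (fun x y z => x * y * z == z * x * y)) ?Q5 // => x y z w; rewrite (inj_eq (mulIg _)). Qed.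

Definition sel x y z w (n : nat) : gT :=
  match n with 0 => x | 1 => y | 2 => z | _ => w end.
Definition mk x y z w : {ffun 'I_4 -> gT} := [ffun i : 'I_4 => sel x y z w i].

Lemma cardN (Q : {ffun 'I_4 -> gT} -> bool) :
  #|[set a : {ffun 'I_4 -> gT} | [forall i, a i \in G] && Q a]| =
  N4 (fun x y z w => Q (mk x y z w)).
Proof.
rewrite -sum1_card big_mkcond /=.
rewrite (reindex (fun t : gT * gT * gT * gT => mk t.1.1.1 t.1.1.2 t.1.2 t.2)) /=; last first.
  apply: onW_bij.
  exists (fun a : {ffun 'I_4 -> gT} =>
     (a (@Ordinal 4 0 isT), a (@Ordinal 4 1 isT), a (@Ordinal 4 2 isT), a (@Ordinal 4 3 isT))).
    by case=> [[[x y] z] w] /=; rewrite !ffunE.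
  move=> a; apply/ffunP => i; rewrite ffunE.
  by case: i => [[|[|[|[|//]]]] Hi] /=; congr (a _); apply: val_inj.
rewrite /N4 !pair_big /= [RHS]big_mkcond /=.
apply: eq_bigr => [[[[x y] z] w]] _ /=.
rewrite inE.
have -> : [forall i, mk x y z w i \in G] = [&& x \in G, y \in G, z \in G & w \in G].
  apply/forallP/and4P => [H|[? ? ? ?] i].
    move: (H (@Ordinal 4 0 isT)) (H (@Ordinal 4 1 isT)) (H (@Ordinal 4 2 isT)) (H (@Ordinal 4 3 isT)).
    by rewrite !ffunE.
  by rewrite ffunE; case: i => [[|[|[|[|//]]]] Hi].
by case: (x \in G); case: (y \in G); case: (z \in G); case: (w \in G); case: (Q _).
Qed.

Lemma leaf n0 n1 n2 n3 : [&& n0 < 4, n1 < 4, n2 < 4 & n3 < 4]%N ->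
  uniq [:: n0; n1; n2; n3] -> (n0 == 0%N) || (n3 == 3%N) ->
  [:: n0; n1; n2; n3] != [:: 0; 1; 2; 3]%N ->
  N4 (fun x y z w => x * y * z * w ==
     sel x y z w n0 * sel x y z w n1 * sel x y z w n2 * sel x y z w n3) = K.
Proof.
case: n0 => [|[|[|[|n0]]]]; case: n1 => [|[|[|[|n1]]]];
case: n2 => [|[|[|[|n2]]]]; case: n3 => [|[|[|[|n3]]]] => /= h1 h2 h3 h4;
try by [];
first [exact: C1 | exact: C2 | exact: C3 | exact: C4 | exact: C5 | exact: C6
      | exact: C7 | exact: C8 | exact: C9].
Qed.

Lemma prod4 (f : 'I_4 -> gT) : \prod_(i < 4) f i =
  f (@Ordinal 4 0 isT) * f (@Ordinal 4 1 isT) * f (@Ordinal 4 2 isT) * f (@Ordinal 4 3 isT).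
Proof.
rewrite !big_ord_recl big_ord0 mulg1 !mulgA.
by congr (f _ * f _ * f _ * f _); apply: val_inj.
Qed.

Lemma eq_N4 P P' : (forall x y z w, P x y z w = P' x y z w) -> N4 P = N4 P'.
Proof.
move=> E; rewrite /N4; apply: eq_bigr => x _; apply: eq_bigr => y _.
by apply: eq_bigr => z _; apply: eq_bigr => w _; rewrite E.
Qed.

Lemma countp (p : 'S_4) : p != 1 -> (p ord0 = ord0 \/ p ord_max = ord_max) ->
  #|[set a : {ffun 'I_4 -> gT} | [forall i, a i \in G] &&
        ((\prod_(i < 4) a i) == (\prod_(i < 4) a (p i)))]| = K.
Proof.
move=> p1 hp; rewrite cardN.
set i0 := @Ordinal 4 0 isT; set i1 := @Ordinal 4 1 isT.
set i2 := @Ordinal 4 2 isT; set i3 := @Ordinal 4 3 isT.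
rewrite (@eq_N4 _ (fun x y z w => x * y * z * w ==
     sel x y z w (p i0) * sel x y z w (p i1) * sel x y z w (p i2) * sel x y z w (p i3))); last first.
  by move=> x y z w; rewrite !prod4 !ffunE.
have inj := @perm_inj _ p.
have ne : forall i j : 'I_4, i != j -> val (p i) != val (p j).
  by move=> i j; apply: contra => /eqP /val_inj /inj ->.
apply: leaf.
- by rewrite !ltn_ord.
- rewrite /= !inE !negb_or !ne //.
- rewrite (_ : i0 = ord0); last by apply: val_inj.
  rewrite (_ : i3 = ord_max); last by apply: val_inj.
  by case: hp => ->; rewrite eqxx ?orbT.
- apply: contra p1 => /eqP [e0 e1 e2 e3]; apply/eqP/permP => i.
  rewrite perm1; apply: val_inj.
  by case: i => [[|[|[|[|//]]]] Hi] /=;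
    first [apply: (etrans _ e0) | apply: (etrans _ e1) | apply: (etrans _ e2) | apply: (etrans _ e3)];
    congr (val (p _)); apply: val_inj.
Qed.
End S.

From mathcomp Require Import ring.
Import GRing.Theory Num.Theory.
Theorem mainTheorem6 (gT : finGroupType) (G : {group gT}) (p : 'S_4) :
  p != 1%g ->
  (p ord0 = ord0 \/ p ord_max = ord_max) ->
  Pr_perm G p = ((nclasses G)%:R / #|G|%:R)%R.
Proof.
move=> p1 hp; rewrite /Pr_perm (@countp gT G p p1 hp) /K commC.
have G0 : (#|G|%:R : rat) != 0%R by rewrite pnatr_eq0 -lt0n cardG_gt0.
rewrite !natrM.
field.
exact: G0.
Qed.
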